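(* For any simple undirected graph $G$, the number of subgraphs isomorphic to the paw graph is $$n_G(\text{paw})=\sum_{\{st,uv\}\in Q}(a_{su}+a_{tv})(a_{sv}+a_{tu}).$$
   Context: $a_{ij}$ are adjacency matrix entries. $Q$ is the set of unordered pairs $\{st,uv\}$ of edges with $s,t,u,v$ pairwise distinct. The paw graph is a triangle with one pendant edge attached to one of its vertices (4 vertices, 4 edges). $n_G(F)$ counts (not necessarily induced) subgraphs isomorphic to $F$. *)

(* Defs.v *)
From mathcomp Require Import all_boot.
Set Implicit Arguments. Unset Strict Implicit. Unset Printing Implicit Defensive.

Section Defs.
Variable T : finType.
Variable e : rel T.

Definition adj (x y : T) : nat := e x y.

Definition edges : {set {set T}} :=
  [set A : {set T} | [exists x, exists y, (x != y) && e x y && (A == [set x; y])]].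

Definition is_copy (V : finType) (eF : rel V) (p : {set T} * {set {set T}}) : bool :=
  let: (Sv, E') := p in
  [&& E' \subset edges,
      [forall A in E', A \subset Sv] &
      [exists f : {ffun V -> T},
         [&& injectiveb f, f @: setT == Sv &
             [forall i, forall j, ([set f i; f j] \in E') == eF i j]]]].

(* n_G(F): number of (not necessarily induced) subgraphs of G isomorphic to F *)
Definition nsub (V : finType) (eF : rel V) : nat :=
  #|[set p : {set T} * {set {set T}} | is_copy eF p]|.

Definition rep (P : {set {set T}}) (q : T * T * T * T) : bool :=
  let: (s, t, u, v) := q in
  [&& uniq [:: s; t; u; v], e s t, e u v & P == [set [set s; t]; [set u; v]]].

Definition Qset : {set {set {set T}}} := [set P | [exists q, rep P q]].

(* the summand (a_su + a_tv)(a_sv + a_tu), computed from any representative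
   (independent of the choice of representative) *)
Definition Qterm (P : {set {set T}}) : nat :=
  if [pick q | rep P q] is Some (s, t, u, v)
  then (adj s u + adj t v) * (adj s v + adj t u) else 0.
End Defs.

(* the paw: triangle 0-1-2 plus pendant edge 2-3 *)
Definition paw_rel : rel 'I_4 := fun i j =>
  let p := (nat_of_ord i, nat_of_ord j) in
  (p \in [:: (0,1); (1,0); (0,2); (2,0); (1,2); (2,1); (2,3); (3,2)]).

(* Main.v *)
Require Import Defs.
From mathcomp Require Import all_boot.
From mathcomp Require Import zify.
Set Implicit Arguments. Unset Strict Implicit. Unset Printing Implicit Defensive.

Definition o0 : 'I_4 := @Ordinal 4 0 isT.
Definition o1 : 'I_4 := @Ordinal 4 1 isT.
Definition o2 : 'I_4 := @Ordinal 4 2 isT.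
Definition o3 : 'I_4 := @Ordinal 4 3 isT.

Lemma ord4P (i : 'I_4) : [\/ i = o0, i = o1, i = o2 | i = o3].
Proof.
case: i => [[|[|[|[|m]]]] Hi].
- by constructor 1; apply/val_inj.
- by constructor 2; apply/val_inj.
- by constructor 3; apply/val_inj.
- by constructor 4; apply/val_inj.
- by [].
Qed.

Lemma set2_eq (T : finType) (x y z w : T) :
  ([set x; y] == [set z; w]) = ((x == z) && (y == w) || (x == w) && (y == z)).
Proof.
apply/eqP/idP.
- move=> E.
  have hx : x \in [set z; w] by rewrite -E !inE eqxx.
  have hy : y \in [set z; w] by rewrite -E !inE eqxx orbT.
  have hz : z \in [set x; y] by rewrite E !inE eqxx.
  have hw : w \in [set x; y] by rewrite E !inE eqxx orbT.
  move: hx hy hz hw; rewrite !inE.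
  case/orP=> /eqP hx; case/orP=> /eqP hy; subst; rewrite ?eqxx ?orbT ?orbb //.
  + by move=> _ /eqP ->; rewrite eqxx.
  + by move=> /eqP ->; rewrite eqxx.
- by case/orP=> /andP[/eqP-> /eqP->] //; rewrite setUC.
Qed.

Lemma image4 (T : finType) (f : {ffun 'I_4 -> T}) :
  f @: setT = [set f o0; f o1; f o2; f o3].
Proof.
apply/setP=> x; rewrite !inE; apply/imsetP/idP.
- case=> i _ ->; by case: (ord4P i) => ->; rewrite eqxx ?orbT.
- by case/orP=> [/orP[/orP[|]|]|] /eqP->; eexists.
Qed.

Lemma inj4 (T : finType) (f : {ffun 'I_4 -> T}) :
  injectiveb f = uniq [:: f o0; f o1; f o2; f o3].
Proof.
apply/injectiveP/idP.
- move=> fi; rewrite /= !inE !negb_or !(inj_eq fi); by [].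
- rewrite /= !inE !negb_or => H i j.
  by case: (ord4P i) => ->; case: (ord4P j) => -> // Hf; move: H; rewrite Hf !eqxx /= ?andbF.
Qed.

Definition I4 := iota 0 4.
Definition pres (Hn : nat -> nat -> bool) (l : seq nat) :=
  all (fun i => all (fun j => Hn (nth 0 l i) (nth 0 l j) == Hn i j) I4) I4.
Definition C1 Hn (table : seq (seq nat)) :=
  all (fun a => all (fun b => all (fun c => all (fun d =>
     pres Hn [:: a; b; c; d] ==> ([:: a; b; c; d] \in table)) I4) I4) I4) I4.
Definition C2 Hn (table : seq (seq nat)) :=
  all (fun l => [&& size l == 4, all (fun x => x < 4) l, uniq l,
                  all (fun j => j \in l) I4 & pres Hn l]) table.

Definition wit (T : finType) (Hn : nat -> nat -> bool) (S : {set T}) (E : {set {set T}})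
  (f : {ffun 'I_4 -> T}) :=
  [&& injectiveb f, f @: setT == S & [forall i, forall j, ([set f i; f j] \in E) == Hn i j]].

Definition gfun (l : seq nat) (i : 'I_4) : 'I_4 := inord (nth 0 l i).
Definition cf (T : finType) (f0 : {ffun 'I_4 -> T}) l := [ffun i => f0 (gfun l i)].

Section Fiber.
Variables (T : finType) (Hn : nat -> nat -> bool) (table : seq (seq nat)).
Hypotheses (hC1 : C1 Hn table) (hC2 : C2 Hn table) (hC3 : uniq table).
Variables (S : {set T}) (E : {set {set T}}) (f0 : {ffun 'I_4 -> T}).
Hypothesis w0 : wit Hn S E f0.

Lemma presP l : pres Hn l -> forall i j : 'I_4, Hn (nth 0 l i) (nth 0 l j) = Hn i j.
Proof.
move=> /allP P i j.
have /P /allP Q : (i : nat) \in I4 by rewrite mem_iota ltn_ord.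
have /Q /eqP // : (j : nat) \in I4 by rewrite mem_iota ltn_ord.
Qed.

Lemma gfunE l i : size l = 4 -> all (fun x => x < 4) l -> (gfun l i : nat) = nth 0 l i.
Proof.
move=> sl /allP al; rewrite /gfun inordK //.
by apply: al; apply: mem_nth; rewrite sl ltn_ord.
Qed.

Lemma wit_cf l : l \in table -> wit Hn S E (cf f0 l).
Proof.
move: w0 => /and3P [/injectiveP inj0 /eqP im0 /forallP w0'].
move/(allP hC2): (l) => /[apply] /and5P [/eqP sl al ul sj pl].
have ge := gfunE _ sl al.
apply/and3P; split.
- apply/injectiveP => i j; rewrite !ffunE => /inj0 /(congr1 val).
  rewrite /= !ge => /eqP; rewrite nth_uniq ?sl ?ltn_ord // => /eqP; exact: val_inj.
- rewrite -im0; apply/eqP/setP => x; apply/imsetP/imsetP.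
  + by case=> i _ ->; rewrite ffunE; exists (gfun l i).
  + case=> j _ ->.
    have jl : (j : nat) \in l by move/allP: sj; apply; rewrite mem_iota ltn_ord.
    have il : index (j : nat) l < 4 by move: jl; rewrite -index_mem sl.
    exists (Ordinal il) => //; rewrite ffunE; congr (f0 _); apply: val_inj.
    by rewrite /= ge /= nth_index.
- apply/forallP => i; apply/forallP => j; rewrite !ffunE.
  move/forallP: (w0' (gfun l i)) => /(_ (gfun l j)) /eqP ->.
  by rewrite !ge presP.
Qed.

Lemma wit_ex f : wit Hn S E f -> exists2 l, l \in table & f = cf f0 l.
Proof.
move: w0 => /and3P [/injectiveP inj0 /eqP im0 /forallP w0'].
case/and3P => [injf /eqP imf /forallP wf].
pose g i := odflt i [pick j | f0 j == f i].
have gE i : f0 (g i) = f i.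
  rewrite /g; case: pickP => [j /eqP //|].
  have : f i \in f0 @: setT by rewrite im0 -imf; apply: imset_f.
  by case/imsetP=> j _ -> /(_ j); rewrite eqxx.
pose l := [:: val (g o0); val (g o1); val (g o2); val (g o3)].
have nl (i : 'I_4) : nth 0 l i = g i by case: (ord4P i) => ->.
have Hg (i j : 'I_4) : Hn (g i) (g j) = Hn i j.
  move/forallP: (w0' (g i)) => /(_ (g j)) /eqP <-.
  by rewrite !gE; move/forallP: (wf i) => /(_ j) /eqP.
have pl : pres Hn l.
  apply/allP => i; rewrite mem_iota add0n leq0n andTb => i4; apply/allP => j; rewrite mem_iota add0n leq0n andTb => j4.
  have := Hg (Ordinal i4) (Ordinal j4); rewrite /= -!nl /= => ->; exact: eqxx.
have lt : l \in table.
  have a4 (k : 'I_4) : (k : nat) \in I4 by rewrite mem_iota ltn_ord.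
  move: hC1 => /allP /(_ _ (a4 (g o0))) /allP /(_ _ (a4 (g o1)))
               /allP /(_ _ (a4 (g o2))) /allP /(_ _ (a4 (g o3))).
  by rewrite pl.
exists l => //; apply/ffunP => i; rewrite ffunE -gE /gfun nl; congr (f0 _).
by apply: val_inj; rewrite /= inordK.
Qed.

Lemma cf_inj l l' : l \in table -> l' \in table -> cf f0 l = cf f0 l' -> l = l'.
Proof.
move: w0 => /and3P [/injectiveP inj0 _ _].
move=> /(allP hC2) /and5P [/eqP sl al _ _ _] /(allP hC2) /and5P [/eqP sl' al' _ _ _] E'.
apply: (@eq_from_nth _ 0); first by rewrite sl sl'.
move=> i; rewrite sl => i4.
move/ffunP: E' => /(_ (Ordinal i4)); rewrite !ffunE => /inj0 /(congr1 val) /=.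
by rewrite !gfunE.
Qed.

Lemma fiber_card : #|[set f | wit Hn S E f]| = size table.
Proof.
have -> : [set f | wit Hn S E f] = [set cf f0 (nth [::] table k) | k : 'I_(size table)].
  apply/setP => f; rewrite inE; apply/idP/imsetP.
  - case/wit_ex => l lt ->.
    have ki : index l table < size table by rewrite index_mem.
    by exists (Ordinal ki) => //=; rewrite nth_index.
  - case=> k _ ->; apply: wit_cf; exact: mem_nth.
rewrite card_imset ?card_ord // => k k' /cf_inj.
move/(_ (mem_nth _ (ltn_ord k)) (mem_nth _ (ltn_ord k'))) => /eqP.
by rewrite nth_uniq // => /eqP; apply: val_inj.
Qed.
End Fiber.

Definition pawn (a b : nat) := (a, b) \in [:: (0,1); (1,0); (0,2); (2,0); (1,2); (2,1); (2,3); (3,2)].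
Definition Mn (a b : nat) := (a, b) \in [:: (0,1); (1,0); (2,3); (3,2)].
Definition tabP : seq (seq nat) := [:: [:: 0;1;2;3]; [:: 1;0;2;3]].
Definition tabM : seq (seq nat) := [:: [:: 0;1;2;3]; [:: 1;0;2;3]; [:: 0;1;3;2]; [:: 1;0;3;2];
  [:: 2;3;0;1]; [:: 3;2;0;1]; [:: 2;3;1;0]; [:: 3;2;1;0]].
Lemma c1P : C1 pawn tabP. Proof. Time by vm_compute. Qed.
Lemma c2P : C2 pawn tabP. Proof. Time by vm_compute. Qed.
Lemma c1M : C1 Mn tabM. Proof. Time by vm_compute. Qed.
Lemma c2M : C2 Mn tabM. Proof. Time by vm_compute. Qed.
Lemma c3P : uniq tabP. Proof. by vm_compute. Qed.
Lemma c3M : uniq tabM. Proof. by vm_compute. Qed.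

Definition permlist (l : seq nat) := [&& size l == 4, all (fun x => x < 4) l, uniq l & all (fun j => j \in l) I4].

Lemma gfun_inj l : permlist l -> injective (gfun l).
Proof.
case/and4P => /eqP sl al ul _ i j /(congr1 val) /=.
rewrite !gfunE // => /eqP; rewrite nth_uniq ?sl ?ltn_ord // => /eqP; exact: val_inj.
Qed.

Lemma gfun_surj l : permlist l -> forall j, exists i, gfun l i = j.
Proof.
case/and4P => /eqP sl al ul sj j.
have jl : (j : nat) \in l by move/allP: sj; apply; rewrite mem_iota ltn_ord.
have il : index (j : nat) l < 4 by move: jl; rewrite -index_mem sl.
exists (Ordinal il); apply: val_inj.
by rewrite /= gfunE //= nth_index.
Qed.

Lemma inj_cf (T : finType) (f : {ffun 'I_4 -> T}) l : permlist l -> injectiveb (cf f l) = injectiveb f.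
Proof.
move=> pl; apply/injectiveP/injectiveP.
- move=> H x y; case: (gfun_surj pl x) => x' <-; case: (gfun_surj pl y) => y' <-.
  by move=> E; congr (gfun l); apply: H; rewrite !ffunE.
- move=> H x y; rewrite !ffunE => /H; exact: gfun_inj.
Qed.

Lemma reindex_cf (T : finType) l (F : {ffun 'I_4 -> T} -> nat) : permlist l ->
  \sum_f F (cf f l) = \sum_f F f.
Proof.
move=> pl; apply/esym; apply: (reindex_inj (h := fun f => cf f l)).
move=> f f' /ffunP E; apply/ffunP => j.
case: (gfun_surj pl j) => i <-; by have := E i; rewrite !ffunE.
Qed.

Section Main.
Variables (T : finType) (e : rel T).
Hypotheses (e_sym : symmetric e) (e_irr : irreflexive e).

Definition pawb (f : {ffun 'I_4 -> T}) : bool :=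
  [&& injectiveb f, e (f o0) (f o1), e (f o0) (f o2), e (f o1) (f o2) & e (f o2) (f o3)].
Definition Ef (f : {ffun 'I_4 -> T}) : {set {set T}} :=
  [set [set f o0; f o1]; [set f o0; f o2]; [set f o1; f o2]; [set f o2; f o3]].
Definition good (p : {set T} * {set {set T}}) :=
  (p.2 \subset edges e) && [forall A in p.2, A \subset p.1].

Lemma is_copy_eq p : is_copy e paw_rel p = good p && [exists f, wit pawn p.1 p.2 f].
Proof. by case: p => Sv E'; rewrite /is_copy /good andbA. Qed.

Lemma edge_e x y : [set x; y] \in edges e -> e x y.
Proof.
rewrite inE => /existsP [a /existsP [b /andP [/andP [_ eab]]]].
rewrite set2_eq => /orP [] /andP [/eqP -> /eqP ->] //; by rewrite e_sym.
Qed.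

Lemma edge_mem x y : e x y -> [set x; y] \in edges e.
Proof.
move=> exy; rewrite inE; apply/existsP; exists x; apply/existsP; exists y.
rewrite exy eqxx andbT andbT; apply/eqP => Exy; move: exy; by rewrite Exy e_irr.
Qed.

Lemma edges_form A : A \in edges e -> exists x y, A = [set x; y].
Proof.
rewrite inE => /existsP [a /existsP [b /andP [_ /eqP ->]]]; by exists a, b.
Qed.

Lemma Ef_mem (f : {ffun 'I_4 -> T}) : injectiveb f -> forall i j, ([set f i; f j] \in Ef f) = pawn i j.
Proof.
move=> /injectiveP fi i j; rewrite !inE !set2_eq !(inj_eq fi).
by case: (ord4P i) => ->; case: (ord4P j) => ->.
Qed.

Lemma Ef_form (f : {ffun 'I_4 -> T}) A : A \in Ef f -> exists i j, A = [set f i; f j].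
Proof.
rewrite !inE => /orP [/orP [/orP [|] | ] | ] /eqP ->; by do 2 eexists.
Qed.

Lemma wit_pawb p (f : {ffun 'I_4 -> T}) : good p -> wit pawn p.1 p.2 f -> pawb f.
Proof.
case/andP => /subsetP sub _ /and3P [fi _ /forallP w].
have ed (i j : 'I_4) : pawn i j -> e (f i) (f j).
  move=> pij; apply: edge_e; apply: sub.
  by move/forallP: (w i) => /(_ j) /eqP ->.
by rewrite /pawb fi !ed.
Qed.

Lemma wit_unique p (f : {ffun 'I_4 -> T}) : good p -> wit pawn p.1 p.2 f -> p = (f @: setT, Ef f).
Proof.
case: p => Sv E'; rewrite /good /wit /=.
move=> /andP [/subsetP sub /forallP sv] /and3P [fi /eqP imf /forallP w].
have key i j : ([set f i; f j] \in E') = ([set f i; f j] \in Ef f).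
  by rewrite Ef_mem //; move/forallP: (w i) => /(_ j) /eqP.
suff -> : E' = Ef f by rewrite imf.
apply/setP => A; apply/idP/idP.
- move=> AE; have := sv A; rewrite AE /= => /subsetP AS.
  case: (edges_form (sub _ AE)) => x [y Axy].
  have : x \in Sv by apply: AS; rewrite Axy !inE eqxx.
  rewrite -imf => /imsetP [i _ xi].
  have : y \in Sv by apply: AS; rewrite Axy !inE eqxx orbT.
  rewrite -imf => /imsetP [j _ yj].
  by move: AE; rewrite Axy xi yj key.
- move=> AinE; case: (Ef_form AinE) => i [j AE]; by rewrite AE key -AE.
Qed.

Lemma pawb_wit (f : {ffun 'I_4 -> T}) : pawb f -> good (f @: setT, Ef f) && wit pawn (f @: setT) (Ef f) f.
Proof.
case/and5P => fi e01 e02 e12 e23.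
apply/andP; split.
- apply/andP; split => /=.
  + apply/subsetP => A AinE; case: (Ef_form AinE) => i [j AE].
    move: AinE; rewrite AE Ef_mem // => pij; apply: edge_mem.
    move: pij; case: (ord4P i) => ->; case: (ord4P j) => -> //= _; by rewrite // e_sym.
  + apply/forallP => A; apply/implyP => /Ef_form [i [j ->]].
    apply/subsetP => x; rewrite !inE => /orP [] /eqP ->; exact: imset_f.
- rewrite /wit fi eqxx /=; apply/forallP => i; apply/forallP => j.
  by rewrite Ef_mem.
Qed.

Lemma sum_card (U : finType) (P : pred U) : #|[set x | P x]| = \sum_x (P x : nat).
Proof.
rewrite -sum1_card big_mkcond /=; apply: eq_bigr => x _; by rewrite inE; case: (P x).
Qed.

Lemma nsub_pawb : 2 * nsub e paw_rel = \sum_f (pawb f : nat).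
Proof.
rewrite /nsub -sum1_card big_distrr /=.
have -> : \sum_(p in [set p | is_copy e paw_rel p]) 2 * 1 =
          \sum_p \sum_f ((good p && wit pawn p.1 p.2 f) : nat).
  rewrite big_mkcond /=; apply: eq_bigr => p _.
  rewrite inE is_copy_eq.
  have -> : \sum_f ((good p && wit pawn p.1 p.2 f) : nat) = #|[set f | good p && wit pawn p.1 p.2 f]|.
    by rewrite sum_card.
  case gp: (good p) => /=; last by rewrite (eq_card0 (A := [set f | false])) // => x; rewrite inE.
  case: existsP => [[f0 w0] | nw].
  - rewrite muln1 (@fiber_card _ pawn tabP c1P c2P c3P _ _ f0 w0) //.
  - apply/esym/eqP; rewrite cards_eq0; apply/eqP/setP => f; rewrite !inE.
    apply/negP => wf; apply: nw; by exists f.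
rewrite exchange_big /=; apply: eq_bigr => f _.
case pf: (pawb f).
- have /andP [g w] := pawb_wit pf.
  rewrite (bigD1 (f @: setT, Ef f)) //= g w big1 // => p /negbTE np.
  case gp: (good p) => //=; case wp: (wit _ _ _ _) => //.
  by rewrite (wit_unique gp wp) eqxx in np.
- rewrite big1 // => p _; case gp: (good p) => //=; case wp: (wit _ _ _ _) => //.
  by rewrite (wit_pawb gp wp) in pf.
Qed.
End Main.

Lemma inord0 : inord 0 = o0. Proof. by apply/val_inj; rewrite /= inordK. Qed.
Lemma inord1 : inord 1 = o1. Proof. by apply/val_inj; rewrite /= inordK. Qed.
Lemma inord2 : inord 2 = o2. Proof. by apply/val_inj; rewrite /= inordK. Qed.
Lemma inord3 : inord 3 = o3. Proof. by apply/val_inj; rewrite /= inordK. Qed.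

Lemma cover2 (T : finType) (A B : {set T}) : cover [set A; B] = A :|: B.
Proof.
apply/setP => x; rewrite /cover; apply/bigcupP/idP.
- by case=> C; rewrite !inE => /orP [] /eqP -> ->; rewrite ?orbT.
- rewrite inE => /orP [xA | xB]; [exists A | exists B]; rewrite // !inE eqxx ?orbT //.
Qed.

Section Main2.
Variables (T : finType) (e : rel T).
Hypotheses (e_sym : symmetric e) (e_irr : irreflexive e).

Definition Rb (f : {ffun 'I_4 -> T}) := [&& injectiveb f, e (f o0) (f o1) & e (f o2) (f o3)].
Definition Pf (f : {ffun 'I_4 -> T}) : {set {set T}} := [set [set f o0; f o1]; [set f o2; f o3]].
Definition term (f : {ffun 'I_4 -> T}) :=
  (adj e (f o0) (f o2) + adj e (f o1) (f o3)) * (adj e (f o0) (f o3) + adj e (f o1) (f o2)).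

Lemma Pf_Q (f : {ffun 'I_4 -> T}) : Rb f -> Pf f \in Qset e.
Proof.
case/and3P => fi e01 e23; rewrite inE; apply/existsP; exists (f o0, f o1, f o2, f o3).
by rewrite /rep -inj4 fi e01 e23 eqxx.
Qed.

Lemma rep_ffun P q : rep e P q -> exists f, Rb f && (Pf f == P).
Proof.
case: q => [[[s t] u] v] /and4P [uq est euv /eqP ->].
exists [ffun i : 'I_4 => nth s [:: s; t; u; v] i].
by rewrite /Rb /Pf inj4 !ffunE /= est euv eqxx; move: uq => /= ->.
Qed.

Lemma Pf_mem (f : {ffun 'I_4 -> T}) : injectiveb f -> forall i j, ([set f i; f j] \in Pf f) = Mn i j.
Proof.
move=> /injectiveP fi i j; rewrite !inE !set2_eq !(inj_eq fi).
by case: (ord4P i) => ->; case: (ord4P j) => ->.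
Qed.

Lemma fiber_eq P (hP : P \in Qset e) (f : {ffun 'I_4 -> T}) : (Rb f && (Pf f == P)) = wit Mn (cover P) P f.
Proof.
apply/idP/idP.
- case/andP => Rf /eqP <-; case/and3P: Rf => fi _ _.
  rewrite /wit fi cover2 image4 /=; apply/andP; split.
  + by apply/eqP/setP => x; rewrite !inE !orbA.
  + by apply/forallP => i; apply/forallP => j; rewrite Pf_mem.
- case/and3P => fi _ /forallP w.
  move: hP; rewrite inE => /existsP [[[[s t] u] v] /and4P [_ est euv /eqP EP]].
  have inP (i j : 'I_4) : Mn i j -> [set f i; f j] \in P.
    by move=> mij; move/forallP: (w i) => /(_ j) /eqP ->.
  have eP x y : [set x; y] \in P -> e x y.
    rewrite EP !inE !set2_eq => /orP [] /orP [] /andP [/eqP -> /eqP ->] //; by rewrite e_sym.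
  rewrite /Rb fi !eP ?inP //=.
  rewrite eqEcard; apply/andP; split.
  + by apply/subsetP => A; rewrite !inE => /orP [] /eqP ->; apply: inP.
  + move/injectiveP: fi => fi.
    rewrite EP cards2 /Pf cards2 !set2_eq !(inj_eq fi) /=.
    by case: (~~ _).
Qed.

Lemma term_eq P (f : {ffun 'I_4 -> T}) : Rb f -> Pf f = P -> term f = Qterm e P.
Proof.
move=> Rf EP; have hP : P \in Qset e by rewrite -EP Pf_Q.
rewrite /Qterm; case: pickP => [[[[s t] u] v] | none]; last first.
  by move: hP; rewrite inE => /existsP [q]; rewrite none.
case/and4P => _ _ _; rewrite -EP /Pf set2_eq !set2_eq /term.
have aC x y : adj e x y = adj e y x by rewrite /adj e_sym.
case/orP => /andP [] /orP [] /andP [/eqP -> /eqP ->] /orP [] /andP [/eqP -> /eqP ->];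
  rewrite ?(aC (f o1) (f o0)) ?(aC (f o2) (f o0)) ?(aC (f o3) (f o0)) ?(aC (f o2) (f o1)) ?(aC (f o3) (f o1)) ?(aC (f o3) (f o2));
  rewrite ?(aC u s) ?(aC v t) ?(aC u t) ?(aC v s); lia.
Qed.


Definition l1 := [:: 0;1;3;2].
Definition l2 := [:: 2;3;0;1].
Definition l3 := [:: 2;3;1;0].
Lemma pl1 : permlist l1. Proof. by []. Qed.
Lemma pl2 : permlist l2. Proof. by []. Qed.
Lemma pl3 : permlist l3. Proof. by []. Qed.

Lemma pointwise (f : {ffun 'I_4 -> T}) :
  Rb f * term f = pawb e f + pawb e (cf f l1) + pawb e (cf f l2) + pawb e (cf f l3).
Proof.
rewrite /pawb !inj_cf ?pl1 ?pl2 ?pl3 // !ffunE /gfun /= !inord0 !inord1 !inord2 !inord3.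
rewrite /Rb /term /adj.
rewrite ?[e (f o1) (f o0)]e_sym ?[e (f o2) (f o0)]e_sym ?[e (f o3) (f o0)]e_sym
        ?[e (f o2) (f o1)]e_sym ?[e (f o3) (f o1)]e_sym ?[e (f o3) (f o2)]e_sym.
by case: (injectiveb f); case: (e (f o0) (f o1)); case: (e (f o0) (f o2)); case: (e (f o0) (f o3));
   case: (e (f o1) (f o2)); case: (e (f o1) (f o3)); case: (e (f o2) (f o3)).
Qed.

Lemma rhs8 : 8 * \sum_(P in Qset e) Qterm e P = \sum_f (Rb f * term f).
Proof.
rewrite big_distrr /=.
have -> : \sum_f (Rb f * term f) = \sum_(f | Rb f) term f.
  by rewrite [RHS]big_mkcond; apply: eq_bigr => f _; case: (Rb f); rewrite ?mul1n ?mul0n.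
rewrite (partition_big Pf (mem (Qset e))) /=; last by move=> f; exact: Pf_Q.
apply: eq_bigr => P hP.
rewrite (eq_bigr (fun _ => Qterm e P)); last by move=> f /andP [Rf /eqP EP]; apply: term_eq.
rewrite sum_nat_const; congr (_ * _).
have [f0 /andP [Rf0 EP0]] : exists f, Rb f && (Pf f == P).
  by move: hP; rewrite inE => /existsP [q /rep_ffun].
have w0 : wit Mn (cover P) P f0 by rewrite -fiber_eq // Rf0 EP0.
rewrite (eq_card (B := [set f | wit Mn (cover P) P f])); last first.
  move=> f; rewrite [in RHS]inE; exact: (fiber_eq hP f).
rewrite (@fiber_card _ Mn tabM c1M c2M c3M _ _ f0 w0) //.
Qed.

End Main2.

Theorem proposition3 (T : finType) (e : rel T)
  (e_sym : symmetric e) (e_irr : irreflexive e) :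
  nsub e paw_rel = \sum_(P in Qset e) Qterm e P.
Proof.
have h1 := nsub_pawb e_sym e_irr.
have h2 := rhs8 e_sym.
have h3 : \sum_f (Rb e f * term e f) = 4 * \sum_f (pawb e f : nat).
  rewrite (eq_bigr _ (fun f _ => pointwise e_sym f)) !big_split /=.
  rewrite (reindex_cf (fun f => (pawb e f : nat)) pl1) (reindex_cf (fun f => (pawb e f : nat)) pl2)
          (reindex_cf (fun f => (pawb e f : nat)) pl3).
  by rewrite !mulSn mul0n addn0 !addnA.
lia.
Qed.
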